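(* Fix $1\le r\le n$. Let $A\in ARI$ be a polynomial-valued mould concentrated in depth $r$, with $A^r$ homogeneous of degree $n-r$, such that $A$ is alternal, push-invariant, and $swap(A)$ is circ-neutral. Let $B=swap(A)$ and assume that $B(v_1,\dots,v_r)=(-1)^{r-1}B(v_r,\dots,v_1)$. Then if $n-r$ is odd, $A=0$.
   Context: $ARI$ is the space of moulds $A=(A^r)_{r\ge0}$ with $A^r\in\mathbb{Q}(u_1,\dots,u_r)$, $A^0=0$. $swap(A)(v_1,\dots,v_r)=A(v_r,v_{r-1}-v_r,\dots,v_1-v_2)$. $A$ is alternal if for every $r\ge2$ and $1\le i\le[r/2]$ the sum of $A^r$ over all shuffles of $(u_1,\dots,u_i)$ with $(u_{i+1},\dots,u_r)$ vanishes. $A$ is push-invariant if $A(u_0,u_1,\dots,u_{r-1})=A(u_1,\dots,u_r)$ with $u_0=-u_1-\dots-u_r$. A mould $B$ in variables $v_i$ is circ-neutral if $\sum_{i=0}^{r-1}B(v_{i+1},\dots,v_r,v_1,\dots,v_i)=0$ for $r>1$. *)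

(* Defs.v *)
From mathcomp Require Import all_boot all_order all_algebra all_fingroup.
From mathcomp Require Import mpoly.
Set Implicit Arguments. Unset Strict Implicit. Unset Printing Implicit Defensive.
Import GRing.Theory.
Local Open Scope ring_scope.

(* A mould concentrated in depth r is represented by its depth-r component
   A^r, a polynomial in Q[u_1,...,u_r] = {mpoly rat[r]} (variable u_{k+1}
   is 'X_k, k : 'I_r).  Mould identities are stated pointwise, evaluating
   at all points of Q^r (equivalent to polynomial identities since Q is
   infinite). *)

Section Moulds.
Variable r : nat.
Implicit Types (A : {mpoly rat[r]}) (v : 'I_r -> rat).

Definition ext v (k : nat) : rat :=
  if insub k is Some i then v i else 0.

Definition vec (f : nat -> rat) : 'I_r -> rat := fun j => f (nat_of_ord j).

(* swap: (v_1,...,v_r) |-> (v_r, v_{r-1}-v_r, ..., v_1-v_2), 0-based *)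
Definition swap_vec v : 'I_r -> rat :=
  vec (fun j => if j == 0%N then ext v (r - 1) else ext v (r - 1 - j) - ext v (r - j)).

Definition swapA A v : rat := A.@[swap_vec v].

(* (u_1,...,u_r) |-> (u_0,u_1,...,u_{r-1}), u_0 = -(u_1+...+u_r) *)
Definition push_vec v : 'I_r -> rat :=
  vec (fun j => if j == 0%N then - \sum_(k < r) v k else ext v (j - 1)).

Definition push_invariant A : Prop := forall v, A.@[push_vec v] = A.@[v].

Definition rot_vec (i : nat) v : 'I_r -> rat := vec (fun j => ext v ((j + i) %% r)).

Definition rev_vec v : 'I_r -> rat := vec (fun j => ext v (r - 1 - j)).

(* swap(A) circ-neutral (only depth r is nonzero) *)
Definition swap_circ_neutral A : Prop :=
  (1 < r)%N -> forall v, \sum_(i < r) swapA A (rot_vec i v) = 0.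

(* s : 'S_r encodes the word (u_{s 0}, ..., u_{s (r-1)}); it is a shuffle of
   (u_1..u_i) with (u_{i+1}..u_r) iff the positions s^-1 of the letters of
   each block are increasing. *)
Definition is_shuffle (i : nat) (s : 'S_r) : bool :=
  [forall a : 'I_r, forall b : 'I_r,
     ((a < b)%N && ((b < i)%N || (i <= a)%N)) ==> ((s^-1)%g a < (s^-1)%g b)%N].

Definition alternal A : Prop :=
  (2 <= r)%N -> forall i : nat, (1 <= i)%N -> (i <= r./2)%N ->
    forall u : 'I_r -> rat,
      \sum_(s : 'S_r | is_shuffle i s) A.@[fun k => u (s k)] = 0.

End Moulds.

(* Main.v *)
Require Import Defs.
From mathcomp Require Import all_boot all_order all_algebra all_fingroup.
From mathcomp Require Import mpoly.
From mathcomp Require Import zify lra.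
Set Implicit Arguments. Unset Strict Implicit. Unset Printing Implicit Defensive.
Import GRing.Theory Num.Theory.
Local Open Scope ring_scope.
Local Notation widen := (widen_ord (leqnSn _)).
Section Zero.
Variable n : nat.
Implicit Types p : {mpoly rat[n.+1]}.

Lemma muni_eval p (v : 'I_n.+1 -> rat) :
  p.@[v] = (map_poly (meval (fun i => v (widen i))) (muni p)).[v ord_max].
Proof.
rewrite muniE mevalE raddf_sum /= horner_sum.
apply: eq_bigr => m _.
idtac.
rewrite -!mul_polyC rmorphM /= !map_polyC /= map_polyXn !hornerE /=.
rewrite mevalZ mevalX.
rewrite big_ord_recr /= mulrA; congr (_ * _ * _).
by apply: eq_bigr => i _; rewrite mnmE.
Qed.

Lemma muni_coef p k m :
  ((muni p)`_k)@_m = \sum_(m' <- msupp p) p@_m' * (([multinom m' (widen i) | i < n] == m) && (m' ord_max == k))%:R.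
Proof.
rewrite muniE coef_sum raddf_sum /=.
apply: eq_bigr => m' _.
rewrite -[_ *: 'X^_]mul_polyC coefCM coefXn mulr_natr mcoeffMn mcoeffZ mcoeffX [k == _]eq_sym.
by case: (_ == m); case: (_ == k); rewrite /= ?mulr0 ?mulr1 ?mulr0n ?mulr1n.
Qed.


End Zero.

Lemma poly_all_roots (Q : {poly rat}) : (forall t, Q.[t] = 0) -> Q = 0.
Proof.
move=> H; apply/eqP/negPn/negP => nz.
pose rs := [seq i%:R | i <- iota 0 (size Q)] : seq rat.
have H1 : all (root Q) rs by apply/allP => x _; apply/rootP; exact: H.
have H2 : uniq rs.
  rewrite map_inj_uniq ?iota_uniq //.
  by move=> a b /eqP; rewrite eqr_nat => /eqP.
by have := max_poly_roots nz H1 H2; rewrite size_map size_iota ltnn.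
Qed.

Lemma mpoly_zero n (p : {mpoly rat[n]}) : (forall v, p.@[v] = 0) -> p = 0.
Proof.
elim: n p => [|n IH] p H.
  rewrite (nvar0_mpolyC p); have := H (fun _ => 0).
  by rewrite {1}(nvar0_mpolyC p) mevalC => ->; rewrite mpolyC0.
have Hc : forall k, (muni p)`_k = 0.
  move=> k; apply: IH => v'.
  have HQ : map_poly (meval v') (muni p) = 0.
    apply: poly_all_roots => t.
    pose v := fun i : 'I_n.+1 => if insub (val i) is Some j then v' j else t.
    rewrite -(H v) muni_eval.
    have -> : v ord_max = t by rewrite /v insubF //= ltnn.
    congr (_.[t]); apply: eq_map_poly => q; apply: meval_eq => i.
    by rewrite /v insubT //= => Hi; congr (v' _); apply: val_inj.
  by rewrite -coef_map HQ coef0.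
apply/mpolyP => m; rewrite mcoeff0.
have := congr1 (mcoeff [multinom m (widen i) | i < n]) (Hc (m ord_max)).
rewrite muni_coef mcoeff0 => <-.
rewrite {1}(mpolyE p) raddf_sum /=; apply: eq_bigr => m' _.
rewrite mcoeffZ mcoeffX; congr (_ * _%:R).
congr (nat_of_bool _).
apply/idP/andP => [/eqP->|[/eqP E1 /eqP E2]]; first by split.
apply/eqP/mnmP => i; case: (unliftP ord_max i) => [j ->|->] //.
have := congr1 (fun mm : 'X_{1..n} => mm j) E1; rewrite !mnmE.
move=> E; suff -> : lift ord_max j = widen j by [].
apply: val_inj => /=; rewrite /bump leqNgt ltn_ord. done.
Qed.

Section Comb.
Variable r : nat.
Local Notation N := r.+1.

Definition rsh (i : nat) (s : 'S_N) : bool :=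
  [forall a : 'I_N, forall b : 'I_N, (a < b)%N ==>
     (((b < i)%N ==> ((s^-1)%g b < (s^-1)%g a)%N) &&
      ((i <= a)%N ==> ((s^-1)%g a < (s^-1)%g b)%N))].

Lemma rshP i (s : 'S_N) : reflect (forall a b : 'I_N, (a < b)%N ->
   ((b < i)%N -> ((s^-1)%g b < (s^-1)%g a)%N) /\
   ((i <= a)%N -> ((s^-1)%g a < (s^-1)%g b)%N)) (rsh i s).
Proof.
apply: (iffP forallP) => [H a b ab|H a].
  have := forallP (H a) b; rewrite ab /= => /andP[/implyP h1 /implyP h2].
  by split.
apply/forallP => b; apply/implyP => ab; have [h1 h2] := H a b ab.
by apply/andP; split; apply/implyP.
Qed.

Lemma q_m_lt (s : 'S_N) (x : 'I_N) : x != s ord0 -> ((s^-1)%g (s ord0) < (s^-1)%g x)%N.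
Proof.
move=> hx; rewrite permK lt0n; apply/negP => /eqP h.
have : (s^-1)%g x = ord0 by apply: val_inj.
by move/(congr1 s); rewrite permKV => E; move/eqP: hx; apply.
Qed.

Lemma rsh_cases i (s : 'S_N) : (i <= N)%N -> rsh i s -> i = s ord0 \/ i = (s ord0).+1.
Proof.
move=> iN /rshP H; set m := s ord0.
have qm : (s^-1)%g m = ord0 by rewrite permK.
case: (ltngtP i m) => [lt|gt|eq]; last by left.
  have ia : (i < N)%N by apply: ltn_trans lt (ltn_ord m).
  have := H (inord i) m; rewrite inordK // => /(_ lt) [_ h].
  by move: (h (leqnn i)); rewrite qm.
case: (ltngtP i m.+1) => [lt2|gt2|eq]; [lia | | by right].
have bN : (m.+1 < N)%N by lia.
have := H m (inord m.+1); rewrite inordK // => /(_ (ltnSn m)) [h _].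
by move: (h gt2); rewrite qm.
Qed.

Lemma rsh_m (s : 'S_N) : rsh (s ord0) s = rsh (s ord0).+1 s.
Proof.
set m := s ord0.
apply/rshP/rshP => H a b ab; split => h.
- case: (ltngtP b m) => [bm|bm|bm].
  + by have [h1 _] := H a b ab; apply: h1.
  + lia.
  + have bm' : b = m by apply: val_inj.
    rewrite bm'; apply: q_m_lt; apply/eqP => E; move: ab; rewrite bm' E -/m ltnn.
    done.
- by have [_ h2] := H a b ab; apply: h2; lia.
- by have [h1 _] := H a b ab; apply: h1; lia.
- case: (ltngtP a m) => [am|am|am].
  + lia.
  + by have [_ h2] := H a b ab; apply: h2; lia.
  + have am' : a = m by apply: val_inj.
    rewrite am'; apply: q_m_lt; apply/eqP => E; move: ab; rewrite am' E -/m ltnn.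
    done.
Qed.

Lemma rsh_sum (s : 'S_N) : \sum_(i < N.+1) (-1) ^+ i * (rsh i s)%:R = 0 :> rat.
Proof.
set m := s ord0.
have m1 : (m < N.+1)%N by apply: ltn_trans (ltn_ord m) _.
have m2 : (m.+1 < N.+1)%N by rewrite ltnS ltn_ord.
rewrite (bigD1 (Ordinal m1)) //= (bigD1 (Ordinal m2)) /=; last first.
  by rewrite -val_eqE /=; apply/negP => /eqP; lia.
rewrite big1 ?addr0 => [|i /andP[h1 h2]]; last first.
  case E: (rsh i s); last by rewrite mulr0.
  have := rsh_cases (ltnSE (ltn_ord i)) E; rewrite -/m => -[] h; exfalso.
    by move: h1; rewrite -val_eqE /= h eqxx.
  by move: h2; rewrite -val_eqE /= h eqxx.
by rewrite -rsh_m exprS mulN1r mulNr addrN.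
Qed.

Lemma antip_sum (f : 'S_N -> rat) :
  \sum_(i < N.+1) (-1) ^+ i * \sum_(s | rsh i s) f s = 0.
Proof.
under eq_bigr do rewrite big_mkcond mulr_sumr.
rewrite exchange_big /=; apply: big1 => s _.
rewrite (eq_bigr (fun i : 'I_N.+1 => f s * ((-1) ^+ i * (rsh i s)%:R))).
  by rewrite -mulr_sumr rsh_sum mulr0.
by move=> i _; case: (rsh i s); rewrite ?mulr1 ?mulr0 // mulrC.
Qed.

Lemma inc_id (q : 'I_N -> 'I_N) :
  (forall a b : 'I_N, (a < b)%N -> (q a < q b)%N) -> forall a, nat_of_ord (q a) = nat_of_ord a.
Proof.
move=> H.
have lo : forall k (a : 'I_N), nat_of_ord a = k -> (k <= q a)%N.
  elim=> [//|k IH] a ak.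
  have kN : (k < N)%N by have := ltn_ord a; lia.
  have := IH (inord k); rewrite inordK // => /(_ erefl) h.
  have := H (inord k) a; rewrite inordK // ak => /(_ (ltnSn k)); lia.
have hi : forall k (a : 'I_N), (nat_of_ord a + k = r)%N -> (q a + k <= r)%N.
  elim=> [|k IH] a ak.
    by rewrite addn0 -ltnS ltn_ord.
  have kN : (a.+1 < N)%N by lia.
  have := IH (inord a.+1); rewrite inordK // => /(_ ltac:(lia)) h.
  have := H a (inord a.+1); rewrite inordK // => /(_ (ltnSn a)); lia.
move=> a; have := lo a a erefl; have := hi (r - a)%N a ltac:(have := ltn_ord a; lia).
lia.
Qed.

Lemma rsh0 (s : 'S_N) : rsh 0 s = (s == 1%g).
Proof.
apply/rshP/eqP => [H|->].
  have hq := inc_id (fun a b ab => (H a b ab).2 (leq0n a)).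
  apply/permP => x; rewrite perm1; apply: val_inj.
  by have := hq (s x); rewrite permK => E; exact: (esym E).
by move=> a b ab; rewrite invg1 !perm1; split.
Qed.

Definition revp : 'S_N := perm (@rev_ord_inj N).

Lemma rshr (s : 'S_N) : rsh N s = (s == revp).
Proof.
apply/rshP/eqP => [H|->].
  have hinc : forall a b : 'I_N, (a < b)%N ->
      (rev_ord ((s^-1)%g a) < rev_ord ((s^-1)%g b))%N.
    move=> a b ab; have := (H a b ab).1 (ltn_ord b); rewrite /=.
    by have := ltn_ord ((s^-1)%g a); have := ltn_ord ((s^-1)%g b); lia.
  have hq := inc_id hinc.
  apply/permP => x; rewrite permE; apply: val_inj => /=.
  by have := hq (s x); rewrite /= permK => <-; have := ltn_ord x; lia.
move=> a b ab.
have E : forall c : 'I_N, nat_of_ord ((revp^-1)%g c) = (r - c)%N.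
  move=> c; have := congr1 val (permKV revp c); rewrite permE /=.
  by have := ltn_ord ((revp^-1)%g c); have := ltn_ord c; lia.
rewrite !E; split => h; last by have := ltn_ord a; lia.
by have := ltn_ord b; lia.
Qed.
End Comb.

Section Shuf.
Variable r : nat.
Local Notation N := r.+1.

Lemma extE (v : 'I_N -> rat) (i : 'I_N) k : k = nat_of_ord i -> ext v k = v i.
Proof. by move=> ->; rewrite /ext (valK i). Qed.

Lemma rsh_shuffle i j (rho t : 'S_N) :
  (forall a b : 'I_N, (a < b)%N -> (b < i)%N ->
     (rho b < rho a)%N && ((rho a < j)%N || (j <= rho b)%N)) ->
  (forall a b : 'I_N, (a < b)%N -> (i <= a)%N ->
     (rho a < rho b)%N && ((rho b < j)%N || (j <= rho a)%N)) ->
  (forall a b : 'I_N, (rho a < rho b)%N -> ((rho b < j)%N || (j <= rho a)%N) ->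
     ((b < a)%N && (a < i)%N) || ((a < b)%N && (i <= a)%N)) ->
  rsh i (t * rho^-1)%g = is_shuffle j t.
Proof.
move=> H1 H2 H3.
have qE : forall a, ((t * rho^-1)^-1)%g a = (t^-1)%g (rho a).
  by move=> a; rewrite invMg invgK permM.
rewrite /is_shuffle.
apply/rshP/idP => [H|H a b ab].
- apply/forallP => c; apply/forallP => d; apply/implyP => /andP[cd blk].
  have := H3 ((rho^-1)%g c) ((rho^-1)%g d); rewrite !permKV => /(_ cd blk).
  case/orP => /andP[h1 h2].
  + by have := (H _ _ h1).1 h2; rewrite !qE !permKV.
  + by have := (H _ _ h1).2 h2; rewrite !qE !permKV.
- rewrite !qE; split => h.
  + have /andP[h1 h2] := H1 a b ab h.
    by have := forallP (forallP H (rho b)) (rho a); rewrite h1 h2.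
  + have /andP[h1 h2] := H2 a b ab h.
    by have := forallP (forallP H (rho a)) (rho b); rewrite h1 h2.
Qed.

Section Rho.
Variable i : nat.
Hypothesis hi : (i <= N)%N.

Definition f1 (a : 'I_N) : 'I_N := inord (if (a < i)%N then (i - 1 - a)%N else a).
Definition f2 (a : 'I_N) : 'I_N := inord (if (a < i)%N then (r - a)%N else (a - i)%N).

Lemma f1E a : nat_of_ord (f1 a) = if (a < i)%N then (i - 1 - a)%N else a.
Proof. by rewrite /f1 inordK //; have := ltn_ord a; case: ifP; lia. Qed.
Lemma f2E a : nat_of_ord (f2 a) = if (a < i)%N then (r - a)%N else (a - i)%N.
Proof. by rewrite /f2 inordK //; have := ltn_ord a; case: ifP; lia. Qed.

Lemma f1_inj : injective f1.
Proof.
move=> a b /(congr1 (@nat_of_ord _)); rewrite !f1E => E; apply: val_inj => /=.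
move: E; have := ltn_ord a; have := ltn_ord b.
by case: (ltnP a i); case: (ltnP b i); lia.
Qed.
Lemma f2_inj : injective f2.
Proof.
move=> a b /(congr1 (@nat_of_ord _)); rewrite !f2E => E; apply: val_inj => /=.
move: E; have := ltn_ord a; have := ltn_ord b.
by case: (ltnP a i); case: (ltnP b i); lia.
Qed.

Definition rho1 : 'S_N := perm f1_inj.
Definition rho2 : 'S_N := perm f2_inj.

Lemma rho1_shuffle t : rsh i (t * rho1^-1)%g = is_shuffle i t.
Proof.
apply: rsh_shuffle => a b; rewrite /rho1 !permE !f1E;
  have := ltn_ord a; have := ltn_ord b;
  case: (ltnP a i); case: (ltnP b i) => /=; lia.
Qed.

Lemma rho2_shuffle t : rsh i (t * rho2^-1)%g = is_shuffle (N - i) t.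
Proof.
apply: rsh_shuffle => a b; rewrite /rho2 !permE !f2E;
  have := ltn_ord a; have := ltn_ord b;
  case: (ltnP a i); case: (ltnP b i) => /=; lia.
Qed.
End Rho.
End Shuf.

Section Antip.
Variable r : nat.
Local Notation N := r.+1.

Lemma shuffle_zero (A : {mpoly rat[N]}) : alternal A ->
  forall i (u : 'I_N -> rat), (1 <= i)%N -> (i <= r)%N ->
  \sum_(s | rsh i s) A.@[fun k => u (s k)] = 0.
Proof.
move=> alt i u i1 ir.
have hi : (i <= N)%N by lia.
have N2 : (2 <= N)%N by lia.
case: (leqP i N./2) => h2.
- rewrite (reindex_inj (mulIg ((rho1 hi)^-1)%g)) /=.
  rewrite (eq_bigl (fun t => is_shuffle i t)) => [|t]; last exact: rho1_shuffle.
  transitivity (\sum_(t | is_shuffle i t)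
      A.@[fun k => (fun c => u (((rho1 hi)^-1)%g c)) (t k)]).
    by apply: eq_bigr => t _; apply: meval_eq => k; rewrite permM.
  exact: (alt N2 i i1 h2 (fun c => u (((rho1 hi)^-1)%g c))).
- rewrite (reindex_inj (mulIg ((rho2 hi)^-1)%g)) /=.
  rewrite (eq_bigl (fun t => is_shuffle (N - i) t)) => [|t]; last exact: rho2_shuffle.
  transitivity (\sum_(t | is_shuffle (N - i) t)
      A.@[fun k => (fun c => u (((rho2 hi)^-1)%g c)) (t k)]).
    by apply: eq_bigr => t _; apply: meval_eq => k; rewrite permM.
  have j1 : (1 <= N - i)%N by lia.
  have j2 : (N - i <= N./2)%N by move: h2; rewrite -!divn2; lia.
  exact: (alt N2 (N - i)%N j1 j2 (fun c => u (((rho2 hi)^-1)%g c))).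
Qed.

Lemma antipode (A : {mpoly rat[N]}) : alternal A ->
  forall u : 'I_N -> rat, A.@[rev_vec u] = (-1) ^+ (N - 1) * A.@[u].
Proof.
move=> alt u.
have := antip_sum (fun s => A.@[fun k => u (s k)]).
rewrite big_ord_recl big_ord_recr /=.
rewrite [\sum_(i < r) _]big1; last first.
  move=> i _; rewrite shuffle_zero ?mulr0 //; have := ltn_ord i; rewrite /bump /=; lia.

rewrite (eq_bigl (fun s => s == 1%g)) => [|s]; last exact: rsh0.
rewrite big_pred1_eq.
rewrite (eq_bigl (fun s => s == revp r)) => [|s]; last first.
  have -> : bump 0 r = N by rewrite /bump.
  exact: rshr.
rewrite big_pred1_eq.
have -> : A.@[rev_vec u] = A.@[fun k => u (revp r k)].
  apply: meval_eq => k; rewrite /rev_vec /vec permE; apply: extE => /=; lia.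
have -> : A.@[fun k => u ((1%g : 'S_N) k)] = A.@[u] by apply: meval_eq => k; rewrite perm1.
have -> : (N - 1)%N = r by lia.
have -> : bump 0 r = N by rewrite /bump.
rewrite expr0 mul1r add0r exprS -signr_odd.
case: (odd r) => /=; rewrite ?expr0 ?expr1 => h; lra.
Qed.
End Antip.

Lemma meval_homog k d (p : {mpoly rat[k]}) (c : rat) v :
  p \is d.-homog -> p.@[fun i => c * v i] = c ^+ d * p.@[v].
Proof.
move=> /dhomogP hp; rewrite !mevalE mulr_sumr; apply: eq_big_seq => m hm.
have -> : d = (\sum_i m i)%N by rewrite -(hp m hm); exact: mdegE.
under eq_bigr do rewrite exprMn.
by rewrite big_split /= prodrXr mulrCA.
Qed.

Section Vec.
Variable r : nat.
Local Notation N := r.+1.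

Lemma ext_vec (g : nat -> rat) k : ext (vec (r:=N) g) k = if (k < N)%N then g k else 0.
Proof.
rewrite /ext; case: insubP => [i hk E|hk]; first by rewrite hk -E.
by rewrite (negbTE hk).
Qed.

Lemma ext_out (v : 'I_N -> rat) k : (N <= k)%N -> ext v k = 0.
Proof. by move=> hk; rewrite /ext insubF // ltnNge hk. Qed.

Lemma swapE (v : 'I_N -> rat) (j : 'I_N) :
  swap_vec v j = ext v (N - 1 - j) - ext v (N - j).
Proof.
rewrite /swap_vec /vec; case: eqP => [->|//].
by rewrite [ext v (N - 0)]ext_out ?subr0 // subn0.
Qed.

Lemma ext_in (w : 'I_N -> rat) m (hm : (m < N)%N) : ext w m = w (inord m).
Proof. by apply: extE; rewrite inordK. Qed.

Lemma vec_ident (v : 'I_N -> rat) (j : 'I_N) :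
  swap_vec (rev_vec v) j =
  push_vec (vec (r:=N) (fun j => - ext (swap_vec v) (N - 1 - j))) j.
Proof.
have e1 : forall m, (m < N)%N -> ext (rev_vec v) m = ext v (N - 1 - m).
  by move=> m hm; rewrite ext_in // /rev_vec /vec inordK.
have e3 : forall m, (m < N)%N -> ext (swap_vec v) m = ext v (N - 1 - m) - ext v (N - m).
  by move=> m hm; rewrite ext_in // swapE inordK.
have hj := ltn_ord j.
rewrite swapE /push_vec [in RHS]/vec /=.
case: (posnP j) => [j0|j1].
  rewrite j0 /= e1; last by lia.
  rewrite !subn0.
  have E : ext (rev_vec v) N = 0 by apply: ext_out.
  rewrite E subr0.
  have -> : (N - 1 - (N - 1) = 0)%N by lia.
  rewrite (eq_bigr (fun k : 'I_N => ext v k.+1 - ext v k)) => [|k _]; last first.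
    have hk := ltn_ord k.
    rewrite /vec e3; last by lia.
    have -> : (N - 1 - (N - 1 - k) = k)%N by lia.
    have -> : (N - (N - 1 - k) = k.+1)%N by lia.
    by rewrite opprB.
  rewrite -(big_mkord xpredT (fun k => ext v k.+1 - ext v k)) telescope_sumr //.
  by rewrite (ext_out _ (leqnn N)) sub0r opprK.
rewrite e1 ?e1; try lia.
rewrite [RHS]ext_in; last by lia.
rewrite /= inordK; last by lia.
rewrite e3; last by lia.
have -> : (N - 1 - (N - 1 - j) = j)%N by lia.
have -> : (N - 1 - (N - j) = j - 1)%N by lia.
have -> : (N - 1 - (N - 1 - (j - 1)) = j - 1)%N by lia.
have -> : (N - (N - 1 - (j - 1)) = j)%N by lia.
by rewrite opprB.
Qed.

Lemma swap_surj (u : 'I_N -> rat) : exists v : 'I_N -> rat, forall j, swap_vec v j = u j.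
Proof.
pose S k := \sum_(0 <= m < k) ext u m.
exists (vec (r:=N) (fun k => S (N - k)%N)) => j.
have hj := ltn_ord j.
have eS : forall k, (k <= N)%N -> ext (vec (r:=N) (fun k => S (N - k)%N)) (N - k) = S k.
  move=> k hk; case: (posnP k) => [->|k0].
    by rewrite subn0 ext_out // /S big_geq.
  rewrite ext_in; last by lia.
  rewrite /vec inordK; last by lia.
  by congr S; lia.
rewrite swapE.
have -> : (N - 1 - j = N - j.+1)%N by lia.
rewrite !eS; try lia.
by rewrite /S big_nat_recr //= addrAC subrr add0r; apply: extE.
Qed.
End Vec.

Theorem lemma15 (r n : nat) (A : {mpoly rat[r]}) :
  (1 <= r)%N -> (r <= n)%N ->
  A \is (n - r)%N.-homog ->
  alternal A ->
  push_invariant A ->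
  swap_circ_neutral A ->
  (forall v : 'I_r -> rat,
     swapA A v = (-1) ^+ (r - 1) * swapA A (rev_vec v)) ->
  odd (n - r) ->
  A = 0.
Proof.
case: r A => [//|r] A _ rn hom alt push _ hrev hodd.
have Hodd : forall v, A.@[fun i => - v i] = - A.@[v].
  move=> v; rewrite (meval_eq (v2 := fun i => -1 * v i)) => [|i]; last by rewrite mulN1r.
  by rewrite (meval_homog _ _ hom) -signr_odd hodd expr1 mulN1r.
have hanti := antipode alt.
have hB : forall v, swapA A v = 0.
  move=> v.
  have E1 : swapA A (rev_vec v) = - ((-1) ^+ (r.+1 - 1) * swapA A v).
    rewrite /swapA (meval_eq _ (vec_ident v)) push.
    rewrite (meval_eq (v2 := fun i => - rev_vec (swap_vec v) i)) => [|i]; last by [].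
    by rewrite Hodd hanti.
  have := hrev v; rewrite E1 mulrN mulrA -exprD addnn -signr_odd odd_double expr0 mul1r.
  move=> h; lra.
apply: mpoly_zero => u.
have [v hv] := swap_surj u.
rewrite -(hB v) /swapA; apply: meval_eq => j; by rewrite hv.
Qed.
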